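(* Let $G$ be a finite simple graph of order $n$ having no connected component of order less than $3$, and let $\mathcal{G}$ be an arbitrary Abelian group of order at least $\Delta(G)+\mathrm{col}(G)+1$. Then there exists a labeling $f\colon E(G)\to\mathcal{G}$ with $f(e)\neq 0$ for all edges $e$, $w_f(v)\neq 0$ for all vertices $v$, and $w_f(u)\neq w_f(v)$ for every edge $uv$.
   Context: $w_f(v)=\sum_{u\in N(v)}f(uv)$ (sum in $\mathcal{G}$, identity $0$). $\Delta(G)$ is the maximum degree; the coloring number $\mathrm{col}(G)$ is the least $k$ such that every subgraph of $G$ has minimum degree less than $k$. *)

(* Defs.v *)
From mathcomp Require Import all_boot all_order all_algebra.
Set Implicit Arguments. Unset Strict Implicit. Unset Printing Implicit Defensive.
Import GRing.Theory.

Definition simple_graph (T : finType) (e : rel T) : Prop :=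
  symmetric e /\ irreflexive e.

Definition deg (T : finType) (e : rel T) (v : T) : nat := #|[set u | e v u]|.

Definition max_deg (T : finType) (e : rel T) : nat := \max_(v : T) deg e v.

(* A (not necessarily induced) subgraph H = (S, F) of G: a vertex set S and a
   symmetric set F of ordered pairs (both orientations of each edge of H),
   every pair of which is an edge of G with both ends in S. *)
Definition is_subgraph (T : finType) (e : rel T) (S : {set T}) (F : {set T * T}) : bool :=
  [forall p : T * T, (p \in F) ==>
     [&& p.1 \in S, p.2 \in S, e p.1 p.2 & ((p.2, p.1) \in F)]].

Definition sub_deg (T : finType) (F : {set T * T}) (v : T) : nat :=
  #|[set u | (v, u) \in F]|.

Definition col_bound (T : finType) (e : rel T) (k : nat) : Prop :=
  forall (S : {set T}) (F : {set T * T}),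
    S != set0 -> is_subgraph e S F -> exists2 v, v \in S & sub_deg F v < k.

Definition is_coloring_number (T : finType) (e : rel T) (k : nat) : Prop :=
  col_bound e k /\ forall j, col_bound e j -> k <= j.

Definition components_at_least3 (T : finType) (e : rel T) : Prop :=
  forall v : T, 3 <= #|[set u | connect e v u]|.

Definition wsum (T : finType) (M : zmodType) (e : rel T) (f : T -> T -> M) (v : T) : M :=
  (\sum_(u | e v u) f v u)%R.

Definition order_at_least (M : Type) (k : nat) : Prop :=
  exists g : 'I_k -> M, injective g.

(* Main.v *)
Require Import Defs.
From mathcomp Require Import all_boot all_order all_algebra.
From mathcomp Require Import zify.
Set Implicit Arguments. Unset Strict Implicit. Unset Printing Implicit Defensive.
Import GRing.Theory.
Local Open Scope ring_scope.

Section StepSec.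
Variables (T : finType) (e : rel T) (M : zmodType).
Hypothesis esym : symmetric e.
Hypothesis eirr : irreflexive e.

Definition finl (f : T -> T -> M) v := [forall y, e v y ==> (f v y != 0)].
Definition good (f : T -> T -> M) :=
  (forall v, finl f v -> wsum e f v != 0) /\
  (forall u v, e u v -> finl f u -> finl f v -> wsum e f u != wsum e f v).
Definition upd (f : T -> T -> M) u v (x : M) :=
  fun a b => if ((a == u) && (b == v)) || ((a == v) && (b == u)) then x else f a b.
Definition finU (f : T -> T -> M) u v := [forall y, e u y ==> (y == v) || (f u y != 0)].

Lemma neq_of_e u v : e u v -> u != v.
Proof. by move=> h; apply/eqP => E; move: h; rewrite E eirr. Qed.

Lemma upd_other f u v x w y : w != u -> w != v -> upd f u v x w y = f w y.
Proof. by move=> h1 h2; rewrite /upd (negbTE h1) (negbTE h2). Qed.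

Lemma wsum_upd_other f u v x w : w != u -> w != v -> wsum e (upd f u v x) w = wsum e f w.
Proof. by move=> h1 h2; apply: eq_bigr => y _; rewrite upd_other. Qed.

Lemma wsum_upd_l f u v x : e u v -> f u v = 0 -> wsum e (upd f u v x) u = wsum e f u + x.
Proof.
move=> huv h0; have nuv := neq_of_e huv.
rewrite /wsum (bigD1 v) //=. rewrite [in RHS](bigD1 v) //= h0 add0r [RHS]addrC.
congr (_ + _); first by rewrite /upd !eqxx.
apply: eq_bigr => y /andP [_ yv]; by rewrite /upd eqxx (negbTE yv) (negbTE nuv).
Qed.

Lemma wsum_upd_r f u v x : e u v -> f v u = 0 -> wsum e (upd f u v x) v = wsum e f v + x.
Proof.
move=> huv h0; have nuv := neq_of_e huv.
have evu : e v u by rewrite esym.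
rewrite /wsum (bigD1 u) //= [in RHS](bigD1 u) //= h0 add0r [RHS]addrC.
congr (_ + _); first by rewrite /upd !eqxx orbT.
apply: eq_bigr => y /andP [_ yu].
by rewrite /upd eqxx (negbTE yu) eq_sym (negbTE nuv).
Qed.

Lemma finl_upd_other f u v x w : w != u -> w != v -> finl (upd f u v x) w = finl f w.
Proof. by move=> h1 h2; apply: eq_forallb => y; rewrite upd_other. Qed.

Lemma finl_upd_l f u v x : e u v -> x != 0 -> finl (upd f u v x) u = finU f u v.
Proof.
move=> huv hx; have nuv := neq_of_e huv.
apply: eq_forallb => y; rewrite /upd eqxx /= (negbTE nuv) /=.
by case: (y == v); rewrite /= ?hx ?implybT.
Qed.

Lemma finl_upd_r f u v x : e u v -> x != 0 -> finl (upd f u v x) v = finU f v u.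
Proof.
move=> huv hx; have nuv := neq_of_e huv.
have nvu : v != u by rewrite eq_sym.
apply: eq_forallb => y; rewrite /upd eqxx /= (negbTE nvu) /=.
by case: (y == u); rewrite /= ?hx ?implybT.
Qed.

Lemma avoid k (g : 'I_k -> M) (ginj : injective g) (B : seq M) :
  (size B < k)%N -> exists x, x \notin B.
Proof.
move=> hs.
case: (boolP [exists i : 'I_k, g i \notin B]) => [/existsP [i hi]|/existsPn hall]; first by exists (g i).
have : (size (map g (enum 'I_k)) <= size B)%N.
  apply: uniq_leq_size; first by rewrite map_inj_uniq ?enum_uniq.
  by move=> y /mapP [i _ ->]; move: (hall i); rewrite negbK.
by rewrite size_map size_enum_ord leqNgt hs.
Qed.

Definition bl (f : T -> T -> M) u v : seq M :=
  if finU f u v then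
    (- wsum e f u) :: [seq wsum e f y - wsum e f u | y <- enum [pred y | e u y && (y != v) && finl f y]]
  else [::].

Lemma size_bl f u v : e u v -> (size (bl f u v) <= (if finU f u v then deg e u else 0))%N.
Proof.
move=> huv; rewrite /bl; case: (finU f u v) => //=.
rewrite size_map -cardE /deg (cardsD1 v) inE huv add1n ltnS.
apply: subset_leq_card; apply/subsetP => y; rewrite !inE => /andP [/andP [-> ->] _].
by [].
Qed.

Lemma bl_spec f u v x : finU f u v -> x \notin bl f u v ->
  (wsum e f u + x != 0) /\
  (forall y, e u y -> y != v -> finl f y -> wsum e f u + x != wsum e f y).
Proof.
rewrite /bl => ->; rewrite inE negb_or => /andP [h1 h2]; split.
  by rewrite addrC addr_eq0.
move=> y ey yv fy; apply: contra h2 => /eqP E; apply/mapP; exists y.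
  by rewrite mem_enum inE ey yv fy.
by rewrite -E addrC addKr.
Qed.

Lemma step_lemma k (g : 'I_k -> M) (ginj : injective g) f u v (extra : seq M) :
  good f -> e u v -> f u v = 0 -> f v u = 0 ->
  (finU f u v -> finU f v u -> wsum e f u != wsum e f v) ->
  (size extra + 1 + (if finU f u v then deg e u else 0) + (if finU f v u then deg e v else 0) < k)%N ->
  exists x, [/\ x \notin extra, x != 0 & good (upd f u v x)].
Proof.
move=> [g1 g2] huv h0 h0' hc hk.
have nuv := neq_of_e huv; have evu : e v u by rewrite esym.
have [x hx] : exists x, x \notin 0 :: extra ++ bl f u v ++ bl f v u.
  apply: (avoid ginj).
  rewrite /= !size_cat; have := size_bl f huv; have := size_bl f evu; move: hk.
  set a := (if finU f u v then _ else _); set b := (if finU f v u then _ else _).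
  move=> hk h1 h2; lia.
rewrite inE !mem_cat !negb_or in hx.
move: hx => /andP [hx0 /andP [hxe /andP [hxu hxv]]].
exists x; split => //.
have Wu := wsum_upd_l x huv h0; have Wv := wsum_upd_r x huv h0'.
have Fu := finl_upd_l f huv hx0; have Fv := finl_upd_r f huv hx0.
have Cu : forall y, e u y -> finl (upd f u v x) u -> finl (upd f u v x) y ->
    wsum e (upd f u v x) u != wsum e (upd f u v x) y.
  move=> y ey; rewrite Fu => fu.
  case: (eqVneq y v) => [->|yv].
    by rewrite Fv => fv; rewrite Wu Wv (inj_eq (addIr x)); exact: hc.
  case: (eqVneq y u) => [yu|yu]; first by rewrite yu eirr in ey.
  rewrite (finl_upd_other f x yu yv) (wsum_upd_other f x yu yv) Wu => fy.
  exact: (bl_spec fu hxu).2.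
have Cv : forall y, e v y -> finl (upd f u v x) v -> finl (upd f u v x) y ->
    wsum e (upd f u v x) v != wsum e (upd f u v x) y.
  move=> y ey; rewrite Fv => fv.
  case: (eqVneq y u) => [->|yu].
    by rewrite Fu => fu; rewrite Wu Wv (inj_eq (addIr x)) eq_sym; exact: hc.
  case: (eqVneq y v) => [yv|yv]; first by rewrite yv eirr in ey.
  rewrite (finl_upd_other f x yu yv) (wsum_upd_other f x yu yv) Wv => fy.
  exact: (bl_spec fv hxv).2.
split.
  move=> w; case: (eqVneq w u) => [->|wu].
    by rewrite Fu => fu; rewrite Wu; exact: (bl_spec fu hxu).1.
  case: (eqVneq w v) => [->|wv].
    by rewrite Fv => fv; rewrite Wv; exact: (bl_spec fv hxv).1.
  by rewrite (finl_upd_other f x wu wv) (wsum_upd_other f x wu wv); exact: g1.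
move=> w1 w2 e12.
case: (eqVneq w1 u) => [E|w1u]; first by rewrite E in e12 *; exact: Cu.
case: (eqVneq w1 v) => [E|w1v]; first by rewrite E in e12 *; exact: Cv.
have e21 : e w2 w1 by rewrite esym.
case: (eqVneq w2 u) => [E|w2u].
  by rewrite E in e21 * => h1 h2; rewrite eq_sym; apply: Cu.
case: (eqVneq w2 v) => [E|w2v].
  by rewrite E in e21 * => h1 h2; rewrite eq_sym; apply: Cv.
rewrite (finl_upd_other f x w1u w1v) (wsum_upd_other f x w1u w1v).
rewrite (finl_upd_other f x w2u w2v) (wsum_upd_other f x w2u w2v); exact: g2.
Qed.

End StepSec.


Lemma path_closed (T : finType) (e : rel T) (K : pred T) :
  (forall x y, K x -> e x y -> K y) -> forall x p, K x -> path e x p -> K (last x p).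
Proof.
move=> hK x p; elim: p x => [|y p IH] x //= hx /andP [exy hp].
exact: IH (hK _ _ hx exy) hp.
Qed.

Lemma has_nbr (T : finType) (e : rel T) : components_at_least3 e -> forall v, exists y, e v y.
Proof.
move=> comp3 v.
case: (boolP [exists y, e v y]) => [/existsP//|/existsPn hn].
have : [set u | connect e v u] \subset [set v].
  apply/subsetP => y; rewrite !inE => /connectP [p hp ->].
  move: hp; case: p => [|y0 p] /=; first by rewrite eqxx.
  by move=> /andP [h _]; move: (hn y0); rewrite h.
move/subset_leq_card; rewrite cards1 => h1; have h3 := comp3 v; lia.
Qed.

Lemma col2 (T : finType) (e : rel T) col : symmetric e -> col_bound e col ->
  forall u v, e u v -> (1 < col)%N.
Proof.
move=> esym colb u v huv.
have S0 : [set u; v] != set0 by apply/set0Pn; exists u; rewrite !inE eqxx.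
have sub : is_subgraph e [set u; v] [set (u, v); (v, u)].
  apply/forallP => q; apply/implyP; rewrite !inE => /orP [] /eqP -> /=;
  by rewrite !eqxx ?orbT ?huv -?(esym u v) ?huv.
have [w] := colb _ _ S0 sub; rewrite !inE => /orP [] /eqP -> h; apply: leq_ltn_trans h;
  apply/card_gt0P; [exists v | exists u]; by rewrite !inE eqxx ?orbT.
Qed.


Section Main.
Variables (T : finType) (e : rel T) (M : zmodType) (col : nat).
Hypothesis esym : symmetric e.
Hypothesis eirr : irreflexive e.
Hypothesis comp3 : components_at_least3 e.
Hypothesis colb : col_bound e col.
Hypothesis hcol : (1 < col)%N.
Variable g : 'I_(max_deg e + col + 1) -> M.
Hypothesis ginj : injective g.

Local Notation dg := (deg e).

Lemma degle w : (dg w <= max_deg e)%N.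
Proof. exact: (leq_bigmax (F := fun v => deg e v)). Qed.

Lemma only_nbr w a b : (dg w <= 1)%N -> e w a -> e w b -> a = b.
Proof.
move=> hd ha hb; apply/eqP; apply: contraTT hd => hab; rewrite -ltnNge.
by apply/card_gt1P; exists a, b; rewrite !inE ha hb.
Qed.

Definition good_center a :=
  (1 < dg a)%N && [exists b, e a b && ((dg a < col) || (dg b < col))%N].

Lemma exists_center z : exists a, connect e z a && good_center a.
Proof.
set S := [set y | connect e z y].
set F := [set q : T * T | e q.1 q.2 && (q.1 \in S)].
have S0 : S != set0 by apply/set0Pn; exists z; rewrite inE connect0.
have sub : is_subgraph e S F.
  apply/forallP => [[a b]] /=; apply/implyP; rewrite inE /= => /andP [eab aS].
  have bS : b \in S by move: aS; rewrite !inE => aS; exact: connect_trans aS (connect1 eab).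
  by rewrite aS bS eab inE /= esym eab bS.
have [v vS hv] := colb S0 sub.
have vS' : connect e z v by move: vS; rewrite inE.
have dv : sub_deg F v = dg v.
  by rewrite /sub_deg /deg; apply: eq_card => y; rewrite !inE /= vS' andbT.
rewrite dv in hv.
have [y evy] := has_nbr comp3 v.
case: (ltnP 1 (dg v)) => hd.
  exists v; rewrite vS' /good_center hd /=; apply/existsP; exists y; by rewrite evy hv.
exists y; rewrite (connect_trans vS' (connect1 evy)) /good_center /=.
have eyv : e y v by rewrite esym.
case: (ltnP 1 (dg y)) => hy; last first.
  have hK : forall x w, x \in [set y; v] -> e x w -> w \in [set y; v].
    move=> x w; rewrite !inE => /orP [] /eqP -> hw.
      by rewrite (only_nbr hy hw eyv) eqxx orbT.
    by rewrite (only_nbr hd hw evy) eqxx.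
  have : [set u | connect e v u] \subset [set y; v].
    apply/subsetP => w; rewrite inE => /connectP [p hp ->].
    by apply: (path_closed hK) hp; rewrite !inE eqxx orbT.
  move/subset_leq_card; rewrite cards2 => h1; have h3 := comp3 v.
  by move: h1; case: (y != v) => /=; lia.
apply/existsP; exists v; by rewrite eyv hv orbT.
Qed.

Definition chooseC z := odflt z [pick a | connect e z a && good_center a].

Lemma chooseC_spec z : connect e z (chooseC z) && good_center (chooseC z).
Proof.
rewrite /chooseC; case: pickP => [a //|hn].
by have [a ha] := exists_center z; rewrite hn in ha.
Qed.

Lemma csym : connect_sym e.
Proof. exact: sym_connect_sym. Qed.

Lemma chooseC_eq z z' : connect e z z' -> chooseC z = chooseC z'.
Proof.
move=> hz; rewrite /chooseC (@eq_pick _ _ (fun a => connect e z' a && good_center a)).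
  by case: pickP => // hn; have [a ha] := exists_center z'; rewrite hn in ha.
move=> a /=; congr (_ && _); apply/idP/idP => h.
  by apply: connect_trans h; rewrite csym.
exact: connect_trans hz h.
Qed.

Definition CS := [set a | chooseC a == a].

Lemma CS_uniq a a' : a \in CS -> a' \in CS -> connect e a a' -> a = a'.
Proof. by rewrite !inE => /eqP h /eqP h' c; rewrite -h -h' (chooseC_eq c). Qed.

Lemma CS_good a : a \in CS -> good_center a.
Proof. by rewrite inE => /eqP h; have := chooseC_spec a; rewrite h => /andP []. Qed.

Lemma chooseC_CS z : chooseC z \in CS.
Proof.
have /andP [c _] := chooseC_spec z.
by rewrite inE -(chooseC_eq c).
Qed.

Definition bsel a := odflt a [pick b | e a b && ((dg a < col) || (dg b < col))%N].

Lemma bsel_spec a : a \in CS -> e a (bsel a) && ((dg a < col) || (dg (bsel a) < col))%N.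
Proof.
move=> ha; have /andP [_ /existsP [b hb]] := CS_good ha.
by rewrite /bsel; case: pickP => [b' //|hn]; rewrite hn in hb.
Qed.

Definition distP z n := [exists p : n.-tuple T, path e z p && (last z p \in CS)].

Lemma dist_ex z : exists n, distP z n.
Proof.
have /andP [c _] := chooseC_spec z.
move/connectP: c => [p hp hl]; exists (size p); apply/existsP; exists (in_tuple p) => /=.
by rewrite hp -hl chooseC_CS.
Qed.

Definition dist z := ex_minn (dist_ex z).

Lemma dist_min z n : distP z n -> (dist z <= n)%N.
Proof. by rewrite /dist; case: ex_minnP => m _ hm /hm. Qed.

Lemma dist_P z : distP z (dist z).
Proof. by rewrite /dist; case: ex_minnP. Qed.

Lemma dist0 z : (dist z == 0%N) = (z \in CS).
Proof.
apply/idP/idP.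
  move=> /eqP h; have := dist_P z; rewrite h => /existsP [p /andP [_]].
  by rewrite (tuple0 p).
move=> hz; rewrite -leqn0; apply: dist_min; apply/existsP; exists [tuple] => /=.
by rewrite hz.
Qed.

Lemma dist_adj u v : e u v -> (dist v <= (dist u).+1)%N.
Proof.
move=> huv; apply: dist_min; have /existsP [p /andP [hp hl]] := dist_P u.
apply/existsP; exists [tuple of u :: p] => /=.
by rewrite esym huv hp hl.
Qed.

Lemma dist_par_ex z : z \notin CS -> exists y, e z y && (dist y < dist z)%N.
Proof.
move=> hz; have := dist_P z; case E: (dist z) => [|n].
  by move: hz; rewrite -dist0 E.
move=> /existsP [[[|y p] hs]] //= /andP [/andP [ezy hp] hl].
have hs' : size p == n by [].
exists y; rewrite ezy /= ltnS; apply: dist_min; apply/existsP; exists (Tuple hs') => /=.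
by rewrite hp hl.
Qed.

Definition par z := odflt z [pick y | e z y && (dist y < dist z)%N].

Lemma par_spec z : z \notin CS -> e z (par z) && (dist (par z) < dist z)%N.
Proof.
move=> hz; have [y hy] := dist_par_ex hz.
by rewrite /par; case: pickP => [y' //|hn]; rewrite hn in hy.
Qed.

Lemma center_nbr a w : a \in CS -> e a w -> [/\ w \notin CS, dist w = 1%N & par w = a].
Proof.
move=> ha haw.
have wC : w \notin CS.
  apply/negP => hw; have E := CS_uniq ha hw (connect1 haw).
  by rewrite E eirr in haw.
have da : dist a = 0%N by apply/eqP; rewrite dist0.
have dw : dist w = 1%N.
  have := dist_adj haw; have : dist w != 0%N by rewrite dist0.
  rewrite da; lia.
have /andP [ep dp] := par_spec wC.
rewrite dw ltnS leqn0 dist0 in dp.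
split => //; symmetry; apply: CS_uniq ha dp _.
exact: connect_trans (connect1 haw) (connect1 ep).
Qed.

Lemma bsel_facts a : a \in CS ->
  [/\ e a (bsel a), bsel a \notin CS, par (bsel a) = a & dist (bsel a) = 1%N].
Proof.
move=> ha; have /andP [hb _] := bsel_spec ha.
by have [? ? ?] := center_nbr ha hb.
Qed.

Definition isb z := (par z \in CS) && (z == bsel (par z)).
Definition keyf z := ((dist z).*2 + ~~ isb z)%N.

Definition pe u v := ((u \notin CS) && (par u == v)) || ((v \notin CS) && (par v == u)).
Definition lab (P : {set T}) u v :=
  e u v && (~~ pe u v || ((u \in P) && (par u == v)) || ((v \in P) && (par v == u))).

Lemma lab_sym P u v : lab P u v = lab P v u.
Proof.
rewrite /lab /pe esym; case: (e v u) => //=.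
by case: (u \in CS); case: (v \in CS); case: (par u == v); case: (par v == u);
  case: (u \in P); case: (v \in P).
Qed.

Record Inv (P : {set T}) (f : T -> T -> M) : Prop := {
 I0 : forall z, z \in P -> z \notin CS;
 I1 : forall z w, z \in P -> w \notin CS -> par w = z -> w \in P;
 I2 : forall a, a \in CS -> bsel a \in P -> forall w, w \notin CS -> par w = a -> w \in P;
 I3 : forall u v, f u v = f v u;
 I4 : forall u v, (f u v != 0) = lab P u v;
 I5 : good e f;
 I6 : forall a, a \in CS -> bsel a \notin P ->
   (forall w, w \notin CS -> par w = a -> w != bsel a -> w \in P) ->
   (forall w, w \notin CS -> par w = bsel a -> w \in P) ->
   wsum e f a != wsum e f (bsel a) }.

Lemma init : exists f, Inv set0 f.
Proof.
have [g0 hg0] : exists x : M, x \notin [:: 0].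
  by apply: (avoid ginj) => /=; lia.
rewrite inE in hg0.
exists (fun u v => if lab set0 u v then g0 else 0).
have nofin : forall v, ~~ finl e (fun u v => if lab set0 u v then g0 else 0) v.
  move=> v; apply/negP => /forallP hv.
  case: (boolP (v \in CS)) => vC.
    have [evb bC pb _] := bsel_facts vC.
    move: (hv (bsel v)); rewrite evb /= /lab evb /pe bC pb eqxx orbT /= !inE /=.
    by rewrite eqxx.
  have /andP [ep _] := par_spec vC.
  move: (hv (par v)); rewrite ep /= /lab ep /pe vC eqxx /= !inE /=.
  by rewrite eqxx.
constructor.
- by move=> z; rewrite inE.
- by move=> z w; rewrite inE.
- by move=> a _; rewrite inE.
- by move=> u v; rewrite lab_sym.
- by move=> u v; case: (lab set0 u v); rewrite ?eqxx.
- by split=> [v|u v _]; rewrite (negbTE (nofin _)).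
- move=> a aC _ hoth _.
  have /andP [h2 _] := CS_good aC.
  have [w ew wb] : exists2 w, e a w & w != bsel a.
    move/card_gt1P: h2 => [x [y [hx hy xy]]]; rewrite !inE in hx hy.
    case: (eqVneq x (bsel a)) => [xb|xb]; last by exists x.
    by exists y => //; rewrite -xb eq_sym.
  have [wC _ pw] := center_nbr aC ew.
  by move: (hoth w wC pw wb); rewrite inE.
Qed.

Lemma gstep P f z : Inv P f -> z \notin CS -> z \notin P ->
  (forall w, w \notin CS -> par w = z -> w \in P) ->
  (isb z -> forall w, w \notin CS -> par w = par z -> w != z -> w \in P) ->
  exists f', Inv (z |: P) f'.
Proof.
case=> i0 i1 i2 i3 i4 i5 i6 hzC hzP hch hb.
have /andP [ezp dzp] := par_spec hzC.
set p := par z in ezp dzp hb *.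
have pz : p != z by apply/negP => /eqP E; move: ezp; rewrite E eirr.
have pP : p \notin P.
  by apply/negP => hp; move: (i1 _ _ hp hzC erefl); rewrite (negbTE hzP).
have f0 : f z p = 0.
  apply/eqP; rewrite -[_ == 0]negbK i4 /lab ezp /pe hzC eqxx /= (negbTE hzP) /=.
  by rewrite (negbTE pP).
have f0' : f p z = 0 by rewrite i3.
have epz : e p z by rewrite esym.
have [x [hxe hx0 hg]] : exists x, [/\ x \notin (if (p \in CS) && (z == bsel p) then [::]
    else [:: if p \in CS then wsum e f (bsel p) - wsum e f p else wsum e f (par p) - wsum e f p]),
    x != 0 & good e (upd f z p x)].
  case D: ((p \in CS) && (z == bsel p)).
    move/andP: D => [pC /eqP zb].
    apply: (step_lemma esym eirr ginj) => //.
      move=> _ _; rewrite eq_sym zb; apply: i6 => //; first by rewrite -zb.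
        move=> w wC wp wb; apply: hb => //; last by rewrite zb.
        by rewrite /isb -/p pC -zb eqxx.
      by rewrite -zb.
    have := bsel_spec pC; rewrite -zb => /andP [_ hc].
    have := degle z; have := degle p.
    case: (finU e f z p); case: (finU e f p z) => /=; case/orP: hc; lia.
  have nf : ~~ finU e f p z.
    apply/negP => /forallP hf.
    case: (boolP (p \in CS)) => pC.
      have zb : z != bsel p by apply/negP => zb; rewrite pC zb in D.
      have [epb bC pb _] := bsel_facts pC.
      move: (hf (bsel p)); rewrite epb /= eq_sym (negbTE zb) /=.
      rewrite i4 /lab epb /pe bC pb eqxx orbT /= (negbTE pP) /=.
      case: (boolP (bsel p \in P)) => //= bP.
      by move: (i2 _ pC bP _ hzC erefl); rewrite (negbTE hzP).
    have /andP [epq dpq] := par_spec pC.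
    have qz : par p != z by apply/negP => /eqP E; move: dpq dzp; rewrite E; lia.
    move: (hf (par p)); rewrite epq /= (negbTE qz) /=.
    rewrite i4 /lab epq /pe pC eqxx /= (negbTE pP) /=.
    case: (boolP (par p \in P)) => //= qP.
    have /andP [_ dqq] := par_spec (i0 _ qP).
    by move=> /eqP E; move: dqq dpq; rewrite E; lia.
  apply: (step_lemma esym eirr ginj) => //.
    by move=> _ h; rewrite h in nf.
  rewrite (negbTE nf) /= addn0; have := degle z.
  case: (finU e f z p) => /=; lia.
exists (upd f z p x); constructor.
- by move=> w; rewrite in_setU1 => /orP [/eqP -> //| /i0].
- move=> w' w; rewrite in_setU1 => /orP [/eqP -> wC pw | hw' wC pw]; rewrite in_setU1.
    by rewrite hch ?orbT.
  by rewrite (i1 _ _ hw' wC pw) orbT.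
- move=> a aC; rewrite in_setU1 => /orP [/eqP bz | hb'] w wC pw; rewrite in_setU1.
    have [_ _ pb _] := bsel_facts aC.
    have pza : p = a by rewrite /p -bz pb.
    case: (eqVneq w z) => //= wz; apply: hb => //.
      by rewrite /isb -/p pza aC bz eqxx.
    by rewrite pw pza.
  by rewrite (i2 _ aC hb' _ wC pw) orbT.
- move=> u v; rewrite /upd i3.
  by case: (u == z); case: (v == p); case: (u == p); case: (v == z).
- move=> u v; rewrite /upd; case: ifP => C.
    rewrite hx0; move/orP: C => [/andP [/eqP -> /eqP ->] | /andP [/eqP -> /eqP ->]].
      by rewrite /lab ezp setU11 eqxx /= !orbT.
    by rewrite /lab epz setU11 eqxx /= !orbT.
  rewrite i4 /lab !in_setU1.
  have h1 : ((u == z) && (par u == v)) = false.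
    apply/negP => /andP [/eqP uz /eqP pu]; subst u v; move: C; rewrite /p !eqxx.
    by [].
  have h2 : ((v == z) && (par v == u)) = false.
    apply/negP => /andP [/eqP vz /eqP pv]; subst u v; move: C; rewrite /p !eqxx orbT.
    by [].
  by rewrite !andb_orl h1 h2.
- exact: hg.
- move=> a aC; rewrite in_setU1 negb_or => /andP [bz bP] hoth hchild.
  have [eab bC pb db] := bsel_facts aC.
  have az : a != z by apply: contraNneq hzC => <-.
  have ab : a != bsel a := neq_of_e eirr eab.
  case: (eqVneq p a) => [pa|pa].
    have D : ((p \in CS) && (z == bsel p)) = false by rewrite pa aC eq_sym (negbTE bz).
    rewrite D pa aC inE in hxe.
    have Wa : wsum e (upd f z p x) a = wsum e f a + x.
      by rewrite -pa (wsum_upd_r esym eirr x ezp f0').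
    have bp : bsel a != p by rewrite pa eq_sym.
    rewrite Wa (wsum_upd_other e f x bz bp).
    apply: contra hxe => /eqP <-; by rewrite addrC addKr.
  case: (eqVneq p (bsel a)) => [pb'|pb'].
    have pC : p \notin CS by rewrite pb'.
    have D : ((p \in CS) && (z == bsel p)) = false by rewrite (negbTE pC).
    rewrite D (negbTE pC) inE pb' pb in hxe.
    have Wb : wsum e (upd f z p x) (bsel a) = wsum e f (bsel a) + x.
      by rewrite -pb' (wsum_upd_r esym eirr x ezp f0').
    have ap : a != p by rewrite pb'.
    rewrite Wb (wsum_upd_other e f x az ap).
    apply: contra hxe => /eqP ->; by rewrite addrC addKr.
  have ap : a != p by rewrite eq_sym.
  have bp : bsel a != p by rewrite eq_sym.
  rewrite (wsum_upd_other e f x az ap) (wsum_upd_other e f x bz bp).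
  apply: i6 => //.
    move=> w wC pw wb; move: (hoth w wC pw wb); rewrite in_setU1.
    case/orP => // /eqP wz; by move: pa; rewrite /p -wz pw eqxx.
  move=> w wC pw; move: (hchild w wC pw); rewrite in_setU1.
  case/orP => // /eqP wz; by move: pb'; rewrite /p -wz pw eqxx.
Qed.

Definition concl (f : T -> T -> M) :=
  [/\ (forall u v, e u v -> f u v = f v u),
      (forall u v, e u v -> f u v <> 0%R),
      (forall v, wsum e f v <> 0%R) &
      (forall u v, e u v -> wsum e f u <> wsum e f v)].

Lemma final P f : Inv P f -> (forall z, z \notin CS -> z \in P) -> concl f.
Proof.
case=> i0 i1 i2 i3 i4 [g1 g2] i6 hP.
have L : forall u v, e u v -> f u v != 0.
  move=> u v huv; rewrite i4 /lab huv /=; case/boolP: (pe u v) => //= /orP [] /andP [C /eqP E].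
    by rewrite (hP u C) E eqxx.
  by rewrite (hP v C) E eqxx orbT.
have F : forall v, finl e f v by move=> v; apply/forallP => y; apply/implyP; exact: L.
split.
- by move=> u v _; exact: i3.
- by move=> u v /L /eqP.
- by move=> v; apply/eqP; exact: g1.
- by move=> u v huv; apply/eqP; exact: g2.
Qed.

Lemma loop n : forall (P : {set T}) (f : T -> T -> M), (#|[set z | (z \notin CS) && (z \notin P)]| <= n)%N ->
  Inv P f -> exists f, concl f.
Proof.
elim: n => [|n IH] P f hn hI.
  exists f; apply: (final hI) => z zC; apply: contraT => zP.
  have : (0 < #|[set z | (z \notin CS) && (z \notin P)]|)%N.
    by apply/card_gt0P; exists z; rewrite inE zC zP.
  lia.
set A := [set z | (z \notin CS) && (z \notin P)] in hn.
case: (set_0Vmem A) => [A0 | [z0 z0A]].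
  exists f; apply: (final hI) => z zC; apply: contraT => zP.
  have : z \in A by rewrite inE zC zP.
  by rewrite A0 inE.
case: (arg_maxnP keyf z0A) => z zA zmax.
have zA' : z \in A := zA.
move: (zA'); rewrite inE => /andP [zC zP].
have hch : forall w, w \notin CS -> par w = z -> w \in P.
  move=> w wC pw; apply: contraT => wP.
  have wA : w \in A by rewrite inE wC wP.
  have := zmax w wA; have /andP [_ dw] := par_spec wC; rewrite pw in dw.
  rewrite /keyf -!muln2; case: (isb w); case: (isb z) => /=; lia.
have hb : isb z -> forall w, w \notin CS -> par w = par z -> w != z -> w \in P.
  move=> /andP [pC /eqP zb] w wC pw wz; apply: contraT => wP.
  have wA : w \in A by rewrite inE wC wP.
  have := zmax w wA.
  have /andP [ew _] := par_spec wC.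
  have /andP [ez _] := par_spec zC.
  rewrite pw in ew.
  have [_ dw _] := center_nbr pC (eq_ind _ _ ew _ (esym _ _)).
  have [_ dz _] := center_nbr pC (eq_ind _ _ ez _ (esym _ _)).
  have iw : isb w = false by rewrite /isb pw pC -zb (negbTE wz).
  have iz : isb z by rewrite /isb pC -zb eqxx.
  by rewrite /keyf iw iz dw dz.
have [f' hI'] := gstep hI zC zP hch hb.
apply: (IH (z |: P) f') => //.
have -> : [set z' | (z' \notin CS) && (z' \notin z |: P)] = A :\ z.
  apply/setP => w; rewrite /A !inE negb_or.
  by case: (w == z); rewrite /= ?andbF.
move: hn; rewrite (cardsD1 z A) zA'; lia.
Qed.

Lemma main_sec : exists f, concl f.
Proof.
have [f hI] := init.
exact: (loop (leqnn _) hI).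
Qed.

End Main.

Local Close Scope ring_scope.
Unset Implicit Arguments.

Theorem mainTheorem6 (T : finType) (e : rel T) (M : zmodType) (col : nat) :
  simple_graph e ->
  components_at_least3 e ->
  is_coloring_number e col ->
  order_at_least M (max_deg e + col + 1) ->
  exists f : T -> T -> M,
    [/\ (forall u v, e u v -> f u v = f v u),
        (forall u v, e u v -> f u v <> 0%R),
        (forall v, wsum e f v <> 0%R) &
        (forall u v, e u v -> wsum e f u <> wsum e f v)].
Proof.
move=> [esym eirr] comp3 [colb _] [g ginj].
case: (pickP (fun _ : T => true)) => [v0 _ | hT]; last first.
  by exists (fun _ _ => 0%R); split => u; have := hT u.
have [y0 e0] := has_nbr comp3 v0.
have hcol := col2 esym colb e0.
exact: (main_sec esym eirr comp3 colb hcol ginj).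
Qed.
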